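(* Any tabular RL algorithm $\mathscr{A}$ with sample complexity $\mathcal{C}(\epsilon,\delta)$ is $\epsilon/(4H)$-robust with sample complexity $\mathcal{C}(\epsilon/2,\delta)$.
   Context: Tabular episodic MDP (finite $\mathcal{S},\mathcal{A}$) with horizon $H$ and per-step reward $r(s,a)$; value $V^{\pi,r}=\mathbb{E}_\pi[\sum_{h=1}^H r(s_h,a_h)]$; $\pi$ is $\epsilon$-optimal if $V^{\pi,r}\ge\max_{\pi'}V^{\pi',r}-\epsilon$. An RL algorithm has sample complexity $\mathcal{C}(\epsilon,\delta)$ if for any reward function it outputs an $\epsilon$-optimal policy using $\mathcal{C}(\epsilon,\delta)$ episodes with probability at least $1-\delta$. It is $g(\epsilon)$-robust with sample complexity $\mathcal{C}(\epsilon,\delta)$ if it outputs a policy that is $\epsilon$-optimal for $r$ using $\mathcal{C}(\epsilon,\delta)$ samples with probability at least $1-\delta$ even when the rewards it observes are those of a perturbed reward $r+\varepsilon$ with $\|\varepsilon\|_\infty\le g(\epsilon)$ (the perturbation being a fixed function of the state–action pair). *)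

(* Defs.v *)
From HB Require Import structures.
From mathcomp Require Import all_boot all_order all_algebra.
From mathcomp Require Import all_classical all_reals all_analysis.
Set Implicit Arguments. Unset Strict Implicit. Unset Printing Implicit Defensive.
Import Order.TTheory GRing.Theory Num.Theory.
Local Open Scope ring_scope.
Local Open Scope classical_set_scope.

Section TabularMDP.
Variables (R : realType) (S A : finType) (H : nat).

Definition reward := S -> A -> R.
(* A (non-stationary, randomized, Markov) policy: pi h s a = prob. of action a
   in state s at step h (steps are 0,...,H-1). *)
Definition policy := nat -> S -> A -> R.

Definition is_distr (T : finType) (p : T -> R) :=
  (forall x, 0 <= p x) /\ \sum_(x : T) p x = 1.

Definition is_policy (pi : policy) :=
  forall h, (h < H)%N -> forall s, is_distr (pi h s).

Definition is_mdp (mu : S -> R) (P : nat -> S -> A -> S -> R) :=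
  is_distr mu /\ forall h, (h < H)%N -> forall s a, is_distr (P h s a).

(* Expected sum of rewards over the remaining k steps starting at step h in s. *)
Fixpoint Vrem (P : nat -> S -> A -> S -> R) (pi : policy) (r : reward)
    (k h : nat) (s : S) : R :=
  match k with
  | 0 => 0
  | k'.+1 => \sum_(a : A) pi h s a *
        (r s a + \sum_(s' : S) P h s a s' * Vrem P pi r k' h.+1 s')
  end.

Definition value (mu : S -> R) (P : nat -> S -> A -> S -> R)
    (pi : policy) (r : reward) : R :=
  \sum_(s : S) mu s * Vrem P pi r H 0 s.

Definition eps_optimal mu P (r : reward) (pi : policy) (eps : R) :=
  is_policy pi /\
  forall pi', is_policy pi' -> value mu P pi' r - eps <= value mu P pi r.

(* "the event E holds with probability at least p" (inner probability, so
   no measurability assumption on E is needed). *)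
Definition with_prob_ge d (Omega : measurableType d) (Pr : probability Omega R)
    (E : set Omega) (p : R) :=
  exists2 F : set Omega, measurable F /\ F `<=` E & (p%:E <= Pr F)%E.

(* An RL algorithm run with input parameters (eps, delta) interacting with the
   MDP and observing rewards robs; all randomness (transitions + internal coins)
   is omega.  It returns (number of episodes used, output policy). *)
Definition algorithm d (Omega : measurableType d) :=
  R -> R -> reward -> Omega -> nat * policy.

Definition has_sample_complexity mu P d (Omega : measurableType d)
    (Pr : probability Omega R) (Alg : algorithm Omega) (C : R -> R -> nat) :=
  forall eps delta, 0 < eps -> 0 < delta < 1 -> forall r : reward,
    with_prob_ge Pr
      [set w | ((Alg eps delta r w).1 <= C eps delta)%N /\
               eps_optimal mu P r (Alg eps delta r w).2 eps]
      (1 - delta).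

Definition robust mu P d (Omega : measurableType d)
    (Pr : probability Omega R) (Alg : algorithm Omega) (g : R -> R)
    (C : R -> R -> nat) :=
  forall eps delta, 0 < eps -> 0 < delta < 1 ->
  exists eps_in delta_in : R,
  forall (r pert : reward), (forall s a, `|pert s a| <= g eps) ->
    with_prob_ge Pr
      [set w | ((Alg eps_in delta_in (fun s a => (r s a + pert s a)%R) w).1
                  <= C eps delta)%N /\
               eps_optimal mu P r
                 (Alg eps_in delta_in (fun s a => (r s a + pert s a)%R) w).2 eps]
      (1 - delta).

End TabularMDP.

(* Main.v *)
Require Import Defs.
From HB Require Import structures.
From mathcomp Require Import all_boot all_order all_algebra.
From mathcomp Require Import all_classical all_reals all_analysis.
From mathcomp Require Import ring lra.
Import Order.TTheory GRing.Theory Num.Theory.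
Local Open Scope ring_scope.

Lemma Vrem_add (R : realType) (S A : finType) (P : nat -> S -> A -> S -> R)
  (pi : policy R S A) (r p : reward R S A) k h s :
  Vrem P pi (fun s a => r s a + p s a) k h s = Vrem P pi r k h s + Vrem P pi p k h s.
Proof.
elim: k h s => [|k IH] h s /=; first by rewrite addr0.
rewrite -big_split /=; apply: eq_bigr => a _.
rewrite -mulrDr; congr (_ * _).
under eq_bigr => s' _ do rewrite IH mulrDr.
rewrite big_split /=; ring.
Qed.

Lemma Vrem_bound (R : realType) (S A : finType) (H : nat) (P : nat -> S -> A -> S -> R)
  (mu : S -> R) (hP : is_mdp H mu P)
  (pi : policy R S A) (hpi : is_policy H pi) (p : reward R S A) (g : R)
  (hg : forall s a, `|p s a| <= g) k h s :
  (h + k <= H)%N -> `|Vrem P pi p k h s| <= k%:R * g.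
Proof.
elim: k h s => [|k IH] h s hk /=; first by rewrite normr0 mul0r.
have hh : (h < H)%N by rewrite -addn1 (leq_trans _ hk) // leq_add2l.
have hk' : (h.+1 + k <= H)%N by rewrite addSnnS.
have [pi0 pi1] := hpi h hh s.
apply: (le_trans (ler_norm_sum _ _ _)).
have -> : k.+1%:R * g = \sum_(a : A) pi h s a * (g + k%:R * g).
  by rewrite -mulr_suml pi1 mul1r -addn1 natrD; ring.
apply: ler_sum => a _.
rewrite normrM ger0_norm //; apply: ler_wpM2l => //.
apply: (le_trans (ler_normD _ _)); apply: lerD => //.
have [P0 P1] := hP.2 h hh s a.
apply: (le_trans (ler_norm_sum _ _ _)).
have -> : k%:R * g = \sum_(s' : S) P h s a s' * (k%:R * g).
  by rewrite -mulr_suml P1 mul1r.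
apply: ler_sum => s' _.
rewrite normrM ger0_norm //; apply: ler_wpM2l => //.
exact: IH.
Qed.

Lemma value_close (R : realType) (S A : finType) (H : nat) (P : nat -> S -> A -> S -> R)
  (mu : S -> R) (hP : is_mdp H mu P)
  (pi : policy R S A) (hpi : is_policy H pi) (r p : reward R S A) (g : R)
  (hg : forall s a, `|p s a| <= g) :
  `|value H mu P pi (fun s a => r s a + p s a) - value H mu P pi r| <= H%:R * g.
Proof.
rewrite /value -sumrB.
under eq_bigr => s _ do rewrite Vrem_add mulrDr addrAC subrr add0r.
apply: (le_trans (ler_norm_sum _ _ _)).
have [[m0 m1] _] := hP.
have -> : H%:R * g = \sum_(s : S) mu s * (H%:R * g).
  by rewrite -mulr_suml m1 mul1r.
apply: ler_sum => s _.
rewrite normrM ger0_norm //; apply: ler_wpM2l => //.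
by apply: (@Vrem_bound _ _ _ _ P mu hP pi hpi p g hg H 0 s); rewrite add0n.
Qed.

Theorem lemma6 (R : realType) (S A : finType) (H : nat) (hH : (0 < H)%N)
    (mu : S -> R) (P : nat -> S -> A -> S -> R) (hP : is_mdp H mu P)
    (d : measure_display) (Omega : measurableType d)
    (Pr : probability Omega R) (Alg : algorithm R S A Omega)
    (C : R -> R -> nat) :
  has_sample_complexity H mu P Pr Alg C ->
  robust H mu P Pr Alg (fun eps => eps / (4 * H%:R))
    (fun eps delta => C (eps / 2) delta).
Proof.
move=> hC eps delta he hd.
exists (eps / 2), delta => r p hp.
have he2 : 0 < eps / 2 by rewrite divr_gt0.
have [F [mF sF] PF] := hC _ _ he2 hd (fun s a => r s a + p s a).
exists F => //; split => // w /sF [h1 [hpol hopt]]; split => //; split => // pi' hpi'.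
have Hpos : 0 < H%:R :> R by rewrite ltr0n.
have HG : H%:R * (eps / (4 * H%:R)) = eps / 4.
  by field; rewrite lt0r_neq0.
have c1 := @value_close _ _ _ _ P mu hP _ hpol r p _ hp.
have c2 := @value_close _ _ _ _ P mu hP _ hpi' r p _ hp.
have := hopt pi' hpi'.
rewrite HG in c1 c2.
move: c1 c2; rewrite !ler_norml => /andP[c1 c1'] /andP[c2 c2'] hh.
move: c1 c1' c2 c2' hh.
set a := value _ _ _ (Alg _ _ _ w).2 _.
set b := value _ _ _ (Alg _ _ _ w).2 r.
set c := value _ _ _ pi' _.
set e := value _ _ _ pi' r.
clear -he. move=> *. lra.
Qed.
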